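(* Let $s>0$ and let $(V_s,\oplus,\otimes)$ be the Möbius gyrovector space on the open disc $V_s=\{z\in\mathbb{C}:|z|<s\}$. Let $ABC$ be a gyrotriangle with vertices $A,B,C\in V_s$, and let $D$ be a point on the gyroside $BC$. Let $l$ be a gyroline passing through none of $A,B,C$, such that $l$ meets the gyroline $AB$ at $M$, the gyroline $AC$ at $N$, and the gyroline $AD$ at $P$. Then $$\frac{(BD)_\gamma}{(CD)_\gamma}\cdot\frac{(CA)_\gamma}{(NA)_\gamma}\cdot\frac{(NP)_\gamma}{(MP)_\gamma}\cdot\frac{(MA)_\gamma}{(BA)_\gamma}=1.$$
   Context: Möbius addition on $V_s$ is $a\oplus b=\dfrac{a+b}{1+\bar a b/s^2}$, with $\ominus a=-a$ and $a\ominus b=a\oplus(-b)$; for $s=1$ this is the Poincaré disc model of hyperbolic geometry. For points $P,Q\in V_s$, the gyrolength (hyperbolic gyrodistance) $PQ$ is $|\ominus P\oplus Q|$. Gyrolines are the geodesics of the Poincaré disc model, i.e. the sets $\{A\oplus(\ominus A\oplus B)\otimes t: t\in\mathbb{R}\}$ for distinct $A,B$ (the gyroline $AB$); equivalently, diameters of the disc and circular arcs in the disc orthogonal to its boundary. The gyroside $BC$ is the geodesic segment joining $B$ and $C$. For a gyrolength $v\in(-s,s)$, the notation $v_\gamma$ means $v_\gamma=\dfrac{v}{1-\frac{v^2}{s^2}}$. *)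

(* Defs.v *)
From Stdlib Require Import Reals.
From Coquelicot Require Import Coquelicot.
Open Scope R_scope.

Definition tanh_ (x : R) : R := (exp x - exp (- x)) / (exp x + exp (- x)).
Definition artanh_ (y : R) : R := ln ((1 + y) / (1 - y)) / 2.

Definition in_disc (s : R) (z : C) : Prop := Cmod z < s.

Definition madd (s : R) (a b : C) : C :=
  Cdiv (Cplus a b) (Cplus (RtoC 1) (Cdiv (Cmult (Cconj a) b) (RtoC (s ^ 2)))).

Definition mscal (s : R) (r : R) (v : C) : C :=
  if Req_EM_T (Cmod v) 0 then RtoC 0
  else Cmult (RtoC (s * tanh_ (r * artanh_ (Cmod v / s)) / Cmod v)) v.

Definition gdist (s : R) (P Q : C) : R := Cmod (madd s (Copp P) Q).

Definition gam (s v : R) : R := v / (1 - v ^ 2 / s ^ 2).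

Definition on_gyroline (s : R) (A B X : C) : Prop :=
  exists t : R, X = madd s A (mscal s t (madd s (Copp A) B)).

Definition in_gyroside (s : R) (A B X : C) : Prop :=
  exists t : R, 0 < t < 1 /\ X = madd s A (mscal s t (madd s (Copp A) B)).

(* Main.v *)
Require Import Defs.
From Stdlib Require Import Reals Lra Psatz.
From Coquelicot Require Import Coquelicot.
Open Scope R_scope.

Definition dn (s a1 a2 b1 b2 : R) := (s^2 + a1*b1 + a2*b2)^2 + (a1*b2 - a2*b1)^2.

Lemma madd_comp s a1 a2 b1 b2 : 0 < s -> dn s a1 a2 b1 b2 <> 0 ->
  madd s (a1,a2) (b1,b2) =
  (s^2*((a1+b1)*(s^2+a1*b1+a2*b2) + (a2+b2)*(a1*b2-a2*b1))/dn s a1 a2 b1 b2,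
   s^2*((a2+b2)*(s^2+a1*b1+a2*b2) - (a1+b1)*(a1*b2-a2*b1))/dn s a1 a2 b1 b2).
Proof.
  intros Hs Hd. unfold dn in *.
  assert (Hs0 : s <> 0) by lra. assert (Hs2 : s^2 <> 0) by (apply pow_nonzero; lra).
  assert (Hq: Cdiv (Cmult (Cconj (a1,a2)) (b1,b2)) (RtoC (s^2)) = ((a1*b1+a2*b2)/s^2, (a1*b2-a2*b1)/s^2)).
  { unfold Cdiv, Cinv, Cmult, Cconj, RtoC; cbn [fst snd]. f_equal; field; auto. }
  unfold madd. rewrite Hq.
  unfold Cdiv, Cinv, Cmult, Cplus, RtoC; cbn [fst snd].
  assert (H: (1 + (a1*b1+a2*b2)/s^2 + 0) ^ 2 + (0 + (a1*b2-a2*b1)/s^2) ^ 2 <> 0).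
  { replace ((1 + (a1*b1+a2*b2)/s^2 + 0) ^ 2 + (0 + (a1*b2-a2*b1)/s^2) ^ 2)
     with (((s^2 + a1*b1 + a2*b2)^2 + (a1*b2 - a2*b1)^2)/(s^2)^2) by (field; auto).
    apply Rmult_integral_contrapositive_currified; auto. apply Rinv_neq_0_compat. apply pow_nonzero; auto. }
  f_equal; field; auto.
Qed.
Definition V3 := (R*R*R)%type.
Definition u3 (s x1 x2 : R) : V3 := (s^2 + x1^2 + x2^2, 2*s*x1, 2*s*x2).
Definition lor (x y : V3) : R := let '(x0,x1,x2) := x in let '(y0,y1,y2) := y in x0*y0 - x1*y1 - x2*y2.
Definition G (x y : V3) : R := lor x y ^2 - lor x x * lor y y.
Definition cross (x y : V3) : V3 := let '(x0,x1,x2) := x in let '(y0,y1,y2) := y in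
  (x1*y2 - x2*y1, x2*y0 - x0*y2, x0*y1 - x1*y0).
Definition Qs (w : V3) : R := let '(w0,w1,w2) := w in w1^2 + w2^2 - w0^2.

Lemma G_u s x1 x2 y1 y2 : G (u3 s x1 x2) (u3 s y1 y2) = 4*s^2*((y1-x1)^2+(y2-x2)^2)*dn s (-x1) (-x2) y1 y2.
Proof. unfold G, u3, lor, dn. ring. Qed.
Lemma G_Qs x y : G x y = Qs (cross x y).
Proof. destruct x as [[x0 x1] x2]; destruct y as [[y0 y1] y2]. unfold G, lor, Qs, cross. ring. Qed.
Definition uC (s : R) (z : C) : V3 := u3 s (fst z) (snd z).
Definition det3 (x y z : V3) : R := let '(x0,x1,x2) := x in let '(y0,y1,y2) := y in let '(z0,z1,z2) := z in
  x0*(y1*z2 - y2*z1) - x1*(y0*z2 - y2*z0) + x2*(y0*z1 - y1*z0).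

Lemma det_madd s a1 a2 v1 v2 w1 w2 : 0 < s -> dn s a1 a2 v1 v2 <> 0 -> dn s a1 a2 w1 w2 <> 0 ->
  det3 (uC s (a1,a2)) (uC s (madd s (a1,a2) (v1,v2))) (uC s (madd s (a1,a2) (w1,w2)))
  = 4 * (s^2)^3 * (s^2 - a1^2 - a2^2)^3 * (v1*w2 - v2*w1) / (dn s a1 a2 v1 v2 * dn s a1 a2 w1 w2).
Proof.
  intros Hs H1 H2. rewrite (madd_comp s a1 a2 v1 v2 Hs H1), (madd_comp s a1 a2 w1 w2 Hs H2).
  unfold uC, u3, det3; cbn [fst snd]. unfold dn in *. field. auto.
Qed.


Lemma dn_pos s a1 a2 b1 b2 : 0 < s -> a1^2+a2^2 < s^2 -> b1^2+b2^2 < s^2 -> 0 < dn s a1 a2 b1 b2.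
Proof.
  intros Hs Ha Hb. unfold dn.
  assert (E : (a1*b1+a2*b2)^2 + (a1*b2-a2*b1)^2 = (a1^2+a2^2)*(b1^2+b2^2)) by ring.
  assert (L : (a1^2+a2^2)*(b1^2+b2^2) < s^2*s^2).
  { apply Rle_lt_trans with ((a1^2+a2^2)*s^2). apply Rmult_le_compat_l; [nra|lra]. apply Rmult_lt_compat_r; [nra|lra]. }
  assert (P : (a1*b1+a2*b2)^2 < s^2*s^2) by (pose proof (pow2_ge_0 (a1*b2-a2*b1)); lra).
  assert (S0 : 0 < s^2) by (apply pow_lt; lra).
  assert (Q : - s^2 < a1*b1+a2*b2).
  { destruct (Rlt_or_le (-s^2) (a1*b1+a2*b2)) as [h|h]; auto.
    assert (s^2 <= - (a1*b1+a2*b2)) by lra.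
    assert (s^2*s^2 <= (a1*b1+a2*b2)^2) by nra. lra. }
  assert (0 < (s^2 + a1*b1 + a2*b2)^2) by (apply pow_lt; lra).
  pose proof (pow2_ge_0 (a1*b2-a2*b1)). lra.
Qed.

Lemma madd_nrm s a1 a2 b1 b2 : 0 < s -> dn s a1 a2 b1 b2 <> 0 ->
  let X := madd s (a1,a2) (b1,b2) in
  fst X ^2 + snd X ^2 = (s^2)^2 * ((a1+b1)^2 + (a2+b2)^2) / dn s a1 a2 b1 b2.
Proof.
  intros Hs H X. unfold X. rewrite madd_comp by auto. cbn [fst snd]. unfold dn in *. field. auto.
Qed.

Lemma madd_disc s a1 a2 b1 b2 : 0 < s -> a1^2+a2^2 < s^2 -> b1^2+b2^2 < s^2 ->
  let X := madd s (a1,a2) (b1,b2) in fst X ^2 + snd X ^2 < s^2.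
Proof.
  intros Hs Ha Hb X. unfold X. pose proof (dn_pos s a1 a2 b1 b2 Hs Ha Hb) as D.
  rewrite madd_nrm by (auto; lra).
  apply Rmult_lt_reg_r with (dn s a1 a2 b1 b2); auto.
  unfold Rdiv. rewrite Rmult_assoc, Rinv_l, Rmult_1_r by lra.
  assert (E : dn s a1 a2 b1 b2 - s^2*((a1+b1)^2+(a2+b2)^2) = (s^2 - (a1^2+a2^2))*(s^2-(b1^2+b2^2))) by (unfold dn; ring).
  assert (0 < (s^2 - (a1^2+a2^2))*(s^2-(b1^2+b2^2))) by (apply Rmult_lt_0_compat; lra).
  nra.
Qed.

Lemma madd_cancel s a1 a2 b1 b2 : 0 < s -> a1^2+a2^2 < s^2 -> b1^2+b2^2 < s^2 ->
  madd s (a1,a2) (madd s (-a1,-a2) (b1,b2)) = (b1,b2).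
Proof.
  intros Hs Ha Hb.
  assert (Ha' : (-a1)^2+(-a2)^2 < s^2) by (replace ((-a1)^2+(-a2)^2) with (a1^2+a2^2) by ring; auto).
  pose proof (madd_disc s (-a1) (-a2) b1 b2 Hs Ha' Hb) as HX. cbv zeta in HX.
  destruct (madd s (-a1,-a2) (b1,b2)) as [x1 x2] eqn:EX. cbn [fst snd] in HX.
  pose proof (dn_pos s (-a1) (-a2) b1 b2 Hs Ha' Hb) as D1.
  pose proof (dn_pos s a1 a2 x1 x2 Hs Ha HX) as D2.
  rewrite madd_comp in EX by (auto; lra). injection EX as E1 E2.
  rewrite madd_comp by (auto; lra).
  assert (K : dn s a1 a2 x1 x2 = (s^2)^2*(s^2-a1^2-a2^2)^2 / dn s (-a1) (-a2) b1 b2).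
  { rewrite <- E1, <- E2. unfold dn in *. field. lra. }
  rewrite K. assert (h0 : s^2-a1^2-a2^2 <> 0) by lra.
  assert (s <> 0) by lra.
  subst x1 x2. unfold dn in *. f_equal; field; repeat split; auto; lra.
Qed.


Definition vadd (x y : V3) : V3 := let '(x0,x1,x2) := x in let '(y0,y1,y2) := y in (x0+y0, x1+y1, x2+y2).
Definition vsc (k : R) (x : V3) : V3 := let '(x0,x1,x2) := x in (k*x0, k*x1, k*x2).
Definition lin3 (x1 x2 x3 : R) (a b c : V3) : V3 := vadd (vadd (vsc x1 a) (vsc x2 b)) (vsc x3 c).
Definition Phi (a b c : V3) (w1 w2 w3 : R) : R := Qs (lin3 w1 w2 w3 (cross a b) (cross a c) (cross b c)).
Definition detc (x1 x2 x3 y1 y2 y3 z1 z2 z3 : R) : R :=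
  x1*(y2*z3 - y3*z2) - x2*(y1*z3 - y3*z1) + x3*(y1*z2 - y2*z1).

Ltac dv := repeat match goal with v : V3 |- _ => destruct v as [[? ?] ?] end.

Lemma cramer a b c x : vsc (det3 a b c) x = lin3 (det3 x b c) (det3 a x c) (det3 a b x) a b c.
Proof. dv. unfold vsc, lin3, vadd, det3. apply (f_equal2 pair); [apply (f_equal2 pair)|]; ring. Qed.

Lemma G_scal_l k x y : G (vsc k x) y = k^2 * G x y.
Proof. dv. unfold G, vsc, lor. ring. Qed.
Lemma G_scal_r k x y : G x (vsc k y) = k^2 * G x y.
Proof. dv. unfold G, vsc, lor. ring. Qed.

Lemma G_lin a b c x1 x2 x3 y1 y2 y3 :
  G (lin3 x1 x2 x3 a b c) (lin3 y1 y2 y3 a b c) = Phi a b c (x1*y2-x2*y1) (x1*y3-x3*y1) (x2*y3-x3*y2).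
Proof. rewrite G_Qs. unfold Phi. f_equal. dv. unfold lin3, vadd, vsc, cross. apply (f_equal2 pair); [apply (f_equal2 pair)|]; ring. Qed.

Lemma Phi_scal a b c k w1 w2 w3 : Phi a b c (k*w1) (k*w2) (k*w3) = k^2 * Phi a b c w1 w2 w3.
Proof. unfold Phi. dv. unfold Qs, lin3, vadd, vsc, cross. ring. Qed.

Lemma det_lin a b c x1 x2 x3 y1 y2 y3 z1 z2 z3 :
  det3 (lin3 x1 x2 x3 a b c) (lin3 y1 y2 y3 a b c) (lin3 z1 z2 z3 a b c) = detc x1 x2 x3 y1 y2 y3 z1 z2 z3 * det3 a b c.
Proof. dv. unfold det3, lin3, vadd, vsc, detc. ring. Qed.

Lemma det_scal k l m x y z : det3 (vsc k x) (vsc l y) (vsc m z) = k*l*m*det3 x y z.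
Proof. dv. unfold det3, vsc. ring. Qed.

Lemma lin_a a b c : a = lin3 1 0 0 a b c. Proof. dv. unfold lin3, vadd, vsc. apply (f_equal2 pair); [apply (f_equal2 pair)|]; ring. Qed.
Lemma lin_b a b c : b = lin3 0 1 0 a b c. Proof. dv. unfold lin3, vadd, vsc. apply (f_equal2 pair); [apply (f_equal2 pair)|]; ring. Qed.
Lemma lin_c a b c : c = lin3 0 0 1 a b c. Proof. dv. unfold lin3, vadd, vsc. apply (f_equal2 pair); [apply (f_equal2 pair)|]; ring. Qed.
Lemma det_cyc x y z : det3 x y z = det3 y z x. Proof. dv. unfold det3. ring. Qed.
Lemma det_sw x y z : det3 x y z = - det3 x z y. Proof. dv. unfold det3. ring. Qed.


Lemma G_coord a b c x1 x2 x3 y1 y2 y3 X Y : X = lin3 x1 x2 x3 a b c -> Y = lin3 y1 y2 y3 a b c ->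
  G X Y = Phi a b c (x1*y2-x2*y1) (x1*y3-x3*y1) (x2*y3-x3*y2).
Proof. intros -> ->. apply G_lin. Qed.

Lemma det_scal23 l m x y z : det3 x (vsc l y) (vsc m z) = l*m*det3 x y z.
Proof. dv. unfold det3, vsc. ring. Qed.

Lemma LA a b c d m n p :
  det3 a b c <> 0 -> det3 b c d = 0 -> det3 a b m = 0 -> det3 a c n = 0 -> det3 a d p = 0 ->
  det3 m n p = 0 -> G m a <> 0 -> G n a <> 0 ->
  G b d * G c a * G n p * G m a = G c d * G n a * G m p * G b a.
Proof.
  intros HD Hbcd Habm Hacn Hadp Hmnp Hma Hna.
  set (D := det3 a b c) in *.
  pose proof (lin_a a b c) as HaL. pose proof (lin_b a b c) as HbL. pose proof (lin_c a b c) as HcL.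
  pose proof (cramer a b c d) as Hd. rewrite (det_cyc d b c), Hbcd in Hd. fold D in Hd.
  pose proof (cramer a b c m) as Hm. rewrite Habm in Hm. fold D in Hm.
  pose proof (cramer a b c n) as Hn.
  replace (det3 a n c) with 0 in Hn by (rewrite det_sw, Hacn; ring). fold D in Hn.
  pose proof (cramer a b c p) as Hp. fold D in Hp.
  set (d2 := det3 a d c) in *. set (d3 := det3 a b d) in *.
  set (m1 := det3 m b c) in *. set (m2 := det3 a m c) in *.
  set (n1 := det3 n b c) in *. set (n3 := det3 a b n) in *.
  set (p1 := det3 p b c) in *. set (p2 := det3 a p c) in *. set (p3 := det3 a b p) in *.
  clearbody d2 d3 m1 m2 n1 n3 p1 p2 p3.
  set (X := Phi a b c 0 0 1). set (Y := Phi a b c 0 1 0). set (Z := Phi a b c 1 0 0).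
  set (W := Phi a b c (m1*0-m2*n1) (m1*n3-0*n1) (m2*n3-0*0)).
  assert (E1 : D^2 * G b d = d3^2 * X).
  { rewrite <- G_scal_r, (G_coord _ _ _ _ _ _ _ _ _ _ _ HbL Hd). unfold X. rewrite <- Phi_scal. f_equal; ring. }
  assert (E2 : D^2 * G c d = (-d2)^2 * X).
  { rewrite <- G_scal_r, (G_coord _ _ _ _ _ _ _ _ _ _ _ HcL Hd). unfold X. rewrite <- Phi_scal. f_equal; ring. }
  assert (E3 : G c a = (-1)^2 * Y).
  { rewrite (G_coord _ _ _ _ _ _ _ _ _ _ _ HcL HaL). unfold Y. rewrite <- Phi_scal. f_equal; ring. }
  assert (E4 : D^2 * G n a = (-n3)^2 * Y).
  { rewrite <- G_scal_l, (G_coord _ _ _ _ _ _ _ _ _ _ _ Hn HaL). unfold Y. rewrite <- Phi_scal. f_equal; ring. }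
  assert (E5 : D^2 * G m a = (-m2)^2 * Z).
  { rewrite <- G_scal_l, (G_coord _ _ _ _ _ _ _ _ _ _ _ Hm HaL). unfold Z. rewrite <- Phi_scal. f_equal; ring. }
  assert (E6 : G b a = (-1)^2 * Z).
  { rewrite (G_coord _ _ _ _ _ _ _ _ _ _ _ HbL HaL). unfold Z. rewrite <- Phi_scal. f_equal; ring. }
  assert (K : detc m1 m2 0 n1 0 n3 p1 p2 p3 = 0).
  { assert (H := det_lin a b c m1 m2 0 n1 0 n3 p1 p2 p3). rewrite <- Hm, <- Hn, <- Hp, det_scal, Hmnp in H.
    fold D in H. apply (Rmult_eq_reg_r D); auto. lra. }
  assert (Kd : d2*p3 - d3*p2 = 0).
  { assert (H := det_lin a b c 1 0 0 0 d2 d3 p1 p2 p3). rewrite <- HaL, <- Hd, <- Hp in H.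
    rewrite det_scal23 in H. rewrite Hadp in H. fold D in H. unfold detc in H.
    assert (H' : (d2*p3 - d3*p2) * D = 0) by lra.
    apply Rmult_integral in H'. destruct H'; auto. contradiction. }
  assert (E7 : (m2*n3)^2 * (D^4 * G n p) = (-(n3*p2))^2 * W).
  { replace (D^4 * G n p) with (G (vsc D n) (vsc D p)) by (rewrite G_scal_l, G_scal_r; ring).
    rewrite (G_coord _ _ _ _ _ _ _ _ _ _ _ Hn Hp). unfold W. rewrite <- !Phi_scal.
    unfold detc in K. assert (HH1 := f_equal (Rmult n3) K). assert (HH2 := f_equal (Rmult m2) K). f_equal; nra. }
  assert (E8 : (m2*n3)^2 * (D^4 * G m p) = (m2*p3)^2 * W).
  { replace (D^4 * G m p) with (G (vsc D m) (vsc D p)) by (rewrite G_scal_l, G_scal_r; ring).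
    rewrite (G_coord _ _ _ _ _ _ _ _ _ _ _ Hm Hp). unfold W. rewrite <- !Phi_scal.
    unfold detc in K. assert (HH1 := f_equal (Rmult n3) K). assert (HH2 := f_equal (Rmult m2) K). f_equal; nra. }
  assert (m2ne : m2 <> 0).
  { intro h. apply Hma. rewrite h in E5. assert (D^2 <> 0) by (apply pow_nonzero; auto).
    apply (Rmult_eq_reg_l (D^2)); auto. rewrite E5. ring. }
  assert (n3ne : n3 <> 0).
  { intro h. apply Hna. rewrite h in E4. assert (D^2 <> 0) by (apply pow_nonzero; auto).
    apply (Rmult_eq_reg_l (D^2)); auto. rewrite E4. ring. }
  assert (D2 : D^2 <> 0) by (apply pow_nonzero; auto).
  assert (D4 : D^4 <> 0) by (apply pow_nonzero; auto).
  assert (MN : (m2*n3)^2 <> 0) by (apply pow_nonzero; apply Rmult_integral_contrapositive_currified; auto).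
  assert (F1 : G b d = d3^2*X/D^2) by (apply (Rmult_eq_reg_l (D^2)); [rewrite E1; field|]; auto).
  assert (F2 : G c d = (-d2)^2*X/D^2) by (apply (Rmult_eq_reg_l (D^2)); [rewrite E2; field|]; auto).
  assert (F4 : G n a = (-n3)^2*Y/D^2) by (apply (Rmult_eq_reg_l (D^2)); [rewrite E4; field|]; auto).
  assert (F5 : G m a = (-m2)^2*Z/D^2) by (apply (Rmult_eq_reg_l (D^2)); [rewrite E5; field|]; auto).
  assert (F7 : G n p = (-(n3*p2))^2*W/((m2*n3)^2*D^4)).
  { apply (Rmult_eq_reg_l ((m2*n3)^2*D^4)); [|apply Rmult_integral_contrapositive_currified; auto].
    rewrite Rmult_assoc, E7. field. auto. }
  assert (F8 : G m p = (m2*p3)^2*W/((m2*n3)^2*D^4)).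
  { apply (Rmult_eq_reg_l ((m2*n3)^2*D^4)); [|apply Rmult_integral_contrapositive_currified; auto].
    rewrite Rmult_assoc, E8. field. auto. }
  rewrite F1, F2, E3, F4, F5, E6, F7, F8.
  set (T := X*Y*W*Z*n3^2*m2^2/(D^2*(m2*n3)^2*D^4*D^2)).
  transitivity ((d3*p2)^2*T). { unfold T. field. auto. }
  transitivity ((d2*p3)^2*T). { replace (d3*p2) with (d2*p3) by lra. reflexivity. }
  unfold T. field. auto.
Qed.

Lemma LA2 a b c d m :
  det3 a b c <> 0 -> det3 b c d = 0 -> det3 a b m = 0 -> det3 a d m = 0 -> G m a <> 0 -> G b d = 0.
Proof.
  intros HD Hbcd Habm Hadm Hma.
  set (D := det3 a b c) in *.
  pose proof (lin_a a b c) as HaL. pose proof (lin_b a b c) as HbL.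
  pose proof (cramer a b c d) as Hd. rewrite (det_cyc d b c), Hbcd in Hd. fold D in Hd.
  pose proof (cramer a b c m) as Hm. rewrite Habm in Hm. fold D in Hm.
  set (d2 := det3 a d c) in *. set (d3 := det3 a b d) in *.
  set (m1 := det3 m b c) in *. set (m2 := det3 a m c) in *.
  clearbody d2 d3 m1 m2.
  assert (E1 : D^2 * G b d = d3^2 * Phi a b c 0 0 1).
  { rewrite <- G_scal_r, (G_coord _ _ _ _ _ _ _ _ _ _ _ HbL Hd). rewrite <- Phi_scal. f_equal; ring. }
  assert (E5 : D^2 * G m a = (-m2)^2 * Phi a b c 1 0 0).
  { rewrite <- G_scal_l, (G_coord _ _ _ _ _ _ _ _ _ _ _ Hm HaL). rewrite <- Phi_scal. f_equal; ring. }
  assert (D2 : D^2 <> 0) by (apply pow_nonzero; auto).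
  assert (m2ne : m2 <> 0).
  { intro h. apply Hma. rewrite h in E5.
    apply (Rmult_eq_reg_l (D^2)); auto. rewrite E5. ring. }
  assert (Kd : d3*m2 = 0).
  { assert (H := det_lin a b c 1 0 0 0 d2 d3 m1 m2 0). rewrite <- HaL, <- Hd, <- Hm in H.
    rewrite det_scal23 in H. rewrite Hadm in H. fold D in H. unfold detc in H.
    assert (H' : (d3*m2) * D = 0) by lra.
    apply Rmult_integral in H'. destruct H'; auto. contradiction. }
  assert (d3 = 0) by (apply Rmult_integral in Kd; destruct Kd; auto; contradiction).
  apply (Rmult_eq_reg_l (D^2)); auto. rewrite E1. subst d3. ring.
Qed.

Lemma plane e f m n p : G e f <> 0 -> det3 e f m = 0 -> det3 e f n = 0 -> det3 e f p = 0 -> det3 m n p = 0.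
Proof.
  intros Hef H1 H2 H3. rewrite G_Qs in Hef.
  destruct e as [[e0 e1] e2]; destruct f as [[f0 f1] f2]; destruct m as [[m0 m1] m2];
  destruct n as [[n0 n1] n2]; destruct p as [[p0 p1] p2].
  unfold det3, cross, Qs in *.
  set (w0 := e1*f2 - e2*f1) in *. set (w1 := e2*f0 - e0*f2) in *. set (w2 := e0*f1 - e1*f0) in *.
  set (dd := m0 * (n1 * p2 - n2 * p1) - m1 * (n0 * p2 - n2 * p0) + m2 * (n0 * p1 - n1 * p0)).
  assert (I0 : dd * w0 = 0).
  { transitivity ((e0 * (f1 * m2 - f2 * m1) - e1 * (f0 * m2 - f2 * m0) + e2 * (f0 * m1 - f1 * m0)) * (n1*p2-n2*p1)
     + (e0 * (f1 * n2 - f2 * n1) - e1 * (f0 * n2 - f2 * n0) + e2 * (f0 * n1 - f1 * n0)) * (p1*m2-p2*m1)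
     + (e0 * (f1 * p2 - f2 * p1) - e1 * (f0 * p2 - f2 * p0) + e2 * (f0 * p1 - f1 * p0)) * (m1*n2-m2*n1)).
    unfold dd, w0, w1, w2. ring. rewrite H1, H2, H3. ring. }
  assert (I1 : dd * w1 = 0).
  { transitivity ((e0 * (f1 * m2 - f2 * m1) - e1 * (f0 * m2 - f2 * m0) + e2 * (f0 * m1 - f1 * m0)) * (n2*p0-n0*p2)
     + (e0 * (f1 * n2 - f2 * n1) - e1 * (f0 * n2 - f2 * n0) + e2 * (f0 * n1 - f1 * n0)) * (p2*m0-p0*m2)
     + (e0 * (f1 * p2 - f2 * p1) - e1 * (f0 * p2 - f2 * p0) + e2 * (f0 * p1 - f1 * p0)) * (m2*n0-m0*n2)).
    unfold dd, w0, w1, w2. ring. rewrite H1, H2, H3. ring. }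
  assert (I2 : dd * w2 = 0).
  { transitivity ((e0 * (f1 * m2 - f2 * m1) - e1 * (f0 * m2 - f2 * m0) + e2 * (f0 * m1 - f1 * m0)) * (n0*p1-n1*p0)
     + (e0 * (f1 * n2 - f2 * n1) - e1 * (f0 * n2 - f2 * n0) + e2 * (f0 * n1 - f1 * n0)) * (p0*m1-p1*m0)
     + (e0 * (f1 * p2 - f2 * p1) - e1 * (f0 * p2 - f2 * p0) + e2 * (f0 * p1 - f1 * p0)) * (m0*n1-m1*n0)).
    unfold dd, w0, w1, w2. ring. rewrite H1, H2, H3. ring. }
  fold dd. destruct (Req_dec dd 0) as [h|h]; auto. exfalso. apply Hef.
  apply Rmult_integral in I0; apply Rmult_integral in I1; apply Rmult_integral in I2.
  destruct I0 as [I0|I0]; [contradiction|]. destruct I1 as [I1|I1]; [contradiction|].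
  destruct I2 as [I2|I2]; [contradiction|]. rewrite I0, I1, I2. ring.
Qed.


Lemma tanh_alt x : tanh_ x = (exp (2*x) - 1)/(exp (2*x) + 1).
Proof.
  unfold tanh_. rewrite exp_Ropp. replace (2*x) with (x+x) by ring. rewrite exp_plus.
  pose proof (exp_pos x). field. split; nra.
Qed.

Lemma tanh_bound x : -1 < tanh_ x < 1.
Proof.
  rewrite tanh_alt. pose proof (exp_pos (2*x)). set (q := exp (2*x)) in *.
  split; [apply (Rmult_lt_reg_r (q+1)) | apply (Rmult_lt_reg_r (q+1))]; try lra;
  unfold Rdiv; rewrite Rmult_assoc, Rinv_l by lra; lra.
Qed.

Lemma tanh_inj x y : tanh_ x = tanh_ y -> x = y.
Proof.
  rewrite !tanh_alt. intro H. pose proof (exp_pos (2*x)). pose proof (exp_pos (2*y)).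
  assert (exp (2*x) = exp (2*y)).
  { apply (f_equal (fun z => z * (exp (2*x)+1) * (exp (2*y)+1))) in H.
    replace ((exp (2 * x) - 1) / (exp (2 * x) + 1) * (exp (2 * x) + 1) * (exp (2 * y) + 1))
      with ((exp (2 * x) - 1) * (exp (2 * y) + 1)) in H by (field; lra).
    replace ((exp (2 * y) - 1) / (exp (2 * y) + 1) * (exp (2 * x) + 1) * (exp (2 * y) + 1))
      with ((exp (2 * y) - 1) * (exp (2 * x) + 1)) in H by (field; lra).
    nra. }
  apply exp_inv in H2. lra.
Qed.

Lemma tanh_0 : tanh_ 0 = 0.
Proof. rewrite tanh_alt. rewrite Rmult_0_r, exp_0. field. Qed.

Lemma tanh_artanh y : -1 < y < 1 -> tanh_ (artanh_ y) = y.
Proof.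
  intro H. rewrite tanh_alt. unfold artanh_.
  replace (2 * (ln ((1 + y) / (1 - y)) / 2)) with (ln ((1 + y) / (1 - y))) by field.
  rewrite exp_ln. field. split; lra.
  apply Rdiv_lt_0_compat; lra.
Qed.

Lemma artanh_pos y : 0 < y < 1 -> 0 < artanh_ y.
Proof.
  intro H. unfold artanh_. apply Rdiv_lt_0_compat; [|lra].
  rewrite <- ln_1. apply ln_increasing; [lra|].
  apply (Rmult_lt_reg_r (1-y)); [lra|]. unfold Rdiv. rewrite Rmult_assoc, Rinv_l by lra. lra.
Qed.

Lemma disc_iff s x1 x2 : 0 < s -> (in_disc s (x1,x2) <-> x1^2+x2^2 < s^2).
Proof.
  intro Hs. unfold in_disc, Cmod. cbn [fst snd].
  assert (0 <= x1^2+x2^2) by nra.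
  split; intro Hh.
  - rewrite <- (sqrt_pow2 s) in Hh by lra. apply sqrt_lt_0_alt in Hh. auto.
  - rewrite <- (sqrt_pow2 s) by lra. apply sqrt_lt_1_alt. lra.
Qed.

Lemma Cmod_sq v1 v2 : Cmod (v1,v2) ^ 2 = v1^2 + v2^2.
Proof. unfold Cmod. cbn [fst snd]. apply pow2_sqrt. nra. Qed.

Lemma mscal_form s t v1 v2 : 0 < s -> exists k, mscal s t (v1,v2) = (k*v1, k*v2) /\ (k*v1)^2 + (k*v2)^2 < s^2.
Proof.
  intro Hs. unfold mscal. destruct (Req_EM_T (Cmod (v1,v2)) 0) as [h|h].
  - exists 0. split. unfold RtoC. f_equal; ring. assert (0 < s^2) by (apply pow_lt; lra). lra.
  - set (k := s * tanh_ (t * artanh_ (Cmod (v1, v2) / s)) / Cmod (v1, v2)).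
    exists k. split. unfold Cmult, RtoC. cbn [fst snd]. f_equal; ring.
    replace ((k*v1)^2 + (k*v2)^2) with ((k * Cmod (v1,v2))^2) by (rewrite Rpow_mult_distr, Cmod_sq; ring).
    unfold k. replace (s * tanh_ (t * artanh_ (Cmod (v1, v2) / s)) / Cmod (v1, v2) * Cmod (v1, v2))
      with (s * tanh_ (t * artanh_ (Cmod (v1, v2) / s))) by (field; auto).
    pose proof (tanh_bound (t * artanh_ (Cmod (v1, v2) / s))).
    rewrite Rpow_mult_distr. assert (0 < s^2) by (apply pow_lt; lra). 
    assert (tanh_ (t * artanh_ (Cmod (v1, v2) / s)) ^2 < 1) by nra. nra.
Qed.

Lemma madd_0 s a1 a2 : 0 < s -> madd s (a1,a2) (0,0) = (a1,a2).
Proof.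
  intro Hs. assert (s <> 0) by lra. assert (s^2 <> 0) by (apply pow_nonzero; lra).
  rewrite madd_comp; auto. unfold dn. f_equal; field; auto.
  unfold dn. assert (0 < s^2) by (apply pow_lt; lra). assert (0 < (s ^ 2 + a1 * 0 + a2 * 0) ^ 2) by (apply pow_lt; lra). nra.
Qed.


Lemma neg_disc s a1 a2 : a1^2+a2^2 < s^2 -> (-a1)^2+(-a2)^2 < s^2.
Proof. intro H. replace ((-a1)^2+(-a2)^2) with (a1^2+a2^2) by ring. auto. Qed.

Lemma sq0 x : x^2 = 0 -> x = 0.
Proof. intro H. destruct (Req_dec x 0); auto. exfalso. apply (pow_nonzero x 2); auto. Qed.

Lemma line_det s a1 a2 b1 b2 X : 0 < s -> a1^2+a2^2 < s^2 -> b1^2+b2^2 < s^2 ->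
  on_gyroline s (a1,a2) (b1,b2) X -> det3 (uC s (a1,a2)) (uC s (b1,b2)) (uC s X) = 0.
Proof.
  intros Hs Ha Hb [t HX].
  change (Copp (a1,a2)) with (-a1,-a2) in HX.
  pose proof (madd_cancel s a1 a2 b1 b2 Hs Ha Hb) as Hc.
  pose proof (madd_disc s (-a1) (-a2) b1 b2 Hs (neg_disc s a1 a2 Ha) Hb) as Hv. cbv zeta in Hv.
  destruct (madd s (-a1,-a2) (b1,b2)) as [v1 v2] eqn:EV. cbn [fst snd] in Hv.
  destruct (mscal_form s t v1 v2 Hs) as [k [Hk Hkd]]. rewrite Hk in HX. subst X. rewrite <- Hc.
  rewrite det_madd; auto.
  replace (v1 * (k * v2) - v2 * (k * v1)) with 0 by ring. unfold Rdiv. ring.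
  apply Rgt_not_eq, dn_pos; auto. apply Rgt_not_eq, dn_pos; auto.
Qed.

Lemma det_line s a1 a2 b1 b2 x1 x2 : 0 < s -> a1^2+a2^2 < s^2 -> b1^2+b2^2 < s^2 -> x1^2+x2^2 < s^2 ->
  (a1,a2) <> (b1,b2) ->
  det3 (uC s (a1,a2)) (uC s (b1,b2)) (uC s (x1,x2)) = 0 -> on_gyroline s (a1,a2) (b1,b2) (x1,x2).
Proof.
  intros Hs Ha Hb Hx Hab Hdet.
  pose proof (madd_cancel s a1 a2 b1 b2 Hs Ha Hb) as Hcb.
  pose proof (madd_cancel s a1 a2 x1 x2 Hs Ha Hx) as Hcx.
  pose proof (madd_disc s (-a1) (-a2) b1 b2 Hs (neg_disc s a1 a2 Ha) Hb) as Hv. cbv zeta in Hv.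
  pose proof (madd_disc s (-a1) (-a2) x1 x2 Hs (neg_disc s a1 a2 Ha) Hx) as Hw. cbv zeta in Hw.
  destruct (madd s (-a1,-a2) (b1,b2)) as [v1 v2] eqn:EV. cbn [fst snd] in Hv.
  destruct (madd s (-a1,-a2) (x1,x2)) as [w1 w2] eqn:EW. cbn [fst snd] in Hw.
  rewrite <- Hcb, <- Hcx in Hdet. rewrite det_madd in Hdet; auto;
    [| apply Rgt_not_eq, dn_pos; auto | apply Rgt_not_eq, dn_pos; auto].
  pose proof (dn_pos s a1 a2 v1 v2 Hs Ha Hv). pose proof (dn_pos s a1 a2 w1 w2 Hs Ha Hw).
  assert (Hcr : v1*w2 - v2*w1 = 0).
  { assert (0 < 4 * (s^2)^3 * (s^2 - a1^2 - a2^2)^3).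
    { apply Rmult_lt_0_compat. apply Rmult_lt_0_compat. lra. apply pow_lt, pow_lt; lra. apply pow_lt; lra. }
    set (K := 4 * (s^2)^3 * (s^2 - a1^2 - a2^2)^3) in *.
    apply (f_equal (fun z => z * (dn s a1 a2 v1 v2 * dn s a1 a2 w1 w2) / K)) in Hdet.
    replace (K * (v1 * w2 - v2 * w1) / (dn s a1 a2 v1 v2 * dn s a1 a2 w1 w2) *
      (dn s a1 a2 v1 v2 * dn s a1 a2 w1 w2) / K) with (v1*w2 - v2*w1) in Hdet by (field; lra).
    rewrite Hdet. unfold Rdiv. ring. }
  assert (Hv0 : 0 < v1^2 + v2^2).
  { pose proof (pow2_ge_0 v1); pose proof (pow2_ge_0 v2).
    destruct (Req_dec (v1^2+v2^2) 0) as [h|h]; [|lra].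
    exfalso. apply Hab. assert (v1 = 0) by (apply sq0; lra).
    assert (v2 = 0) by (apply sq0; lra). subst v1 v2.
    rewrite <- Hcb. rewrite madd_0; auto. }
  set (r := (v1*w1+v2*w2)/(v1^2+v2^2)).
  assert (Hw1 : w1 = r*v1).
  { assert (h : w1*(v1^2+v2^2) - (v1*w1+v2*w2)*v1 = -v2*(v1*w2-v2*w1)) by ring. rewrite Hcr in h.
    apply (Rmult_eq_reg_r (v1^2+v2^2)); [|lra]. unfold r. field_simplify; lra. }
  assert (Hw2 : w2 = r*v2).
  { assert (h : w2*(v1^2+v2^2) - (v1*w1+v2*w2)*v2 = v1*(v1*w2-v2*w1)) by ring. rewrite Hcr in h.
    apply (Rmult_eq_reg_r (v1^2+v2^2)); [|lra]. unfold r. field_simplify; lra. }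
  set (cv := Cmod (v1,v2)).
  assert (Hcv2 : cv^2 = v1^2+v2^2) by apply Cmod_sq.
  assert (Hcv0 : 0 < cv) by (unfold cv, Cmod; cbn [fst snd]; apply sqrt_lt_R0; lra).
  assert (Hcvs : cv < s) by nra.
  assert (Hrc : (r*cv)^2 < s^2) by (rewrite Rpow_mult_distr, Hcv2; rewrite Hw1, Hw2 in Hw; nra).
  assert (Hrc' : -1 < r*cv/s < 1).
  { assert (-s < r*cv < s) by nra. split; apply (Rmult_lt_reg_r s); try lra; unfold Rdiv; rewrite Rmult_assoc, Rinv_l; lra. }
  assert (Hal : 0 < artanh_ (cv/s)).
  { apply artanh_pos. split; apply (Rmult_lt_reg_r s); try lra; unfold Rdiv; rewrite ?Rmult_assoc, ?Rinv_l; lra. }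
  exists (artanh_ (r*cv/s) / artanh_ (cv/s)).
  change (Copp (a1,a2)) with (-a1,-a2). rewrite EV.
  unfold mscal. fold cv. destruct (Req_EM_T cv 0) as [h|h]; [lra|].
  replace (artanh_ (r * cv / s) / artanh_ (cv / s) * artanh_ (cv / s)) with (artanh_ (r*cv/s)) by (field; lra).
  rewrite tanh_artanh by auto.
  replace (s * (r * cv / s) / cv) with r by (field; lra).
  rewrite <- Hcx. f_equal. unfold Cmult, RtoC. cbn [fst snd]. rewrite Hw1, Hw2. f_equal; ring.
Qed.


Lemma gam_facts s x1 x2 y1 y2 : 0 < s -> x1^2+x2^2 < s^2 -> y1^2+y2^2 < s^2 ->
  let g := gam s (gdist s (x1,x2) (y1,y2)) in
  0 <= g /\ g^2 * (4*(s^2-x1^2-x2^2)^2*(s^2-y1^2-y2^2)^2) = s^2 * G (uC s (x1,x2)) (uC s (y1,y2)) /\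
  ((x1,x2) <> (y1,y2) -> 0 < g).
Proof.
  intros Hs Hx Hy g. unfold g, gam, gdist. change (Copp (x1,x2)) with (-x1,-x2).
  pose proof (dn_pos s (-x1) (-x2) y1 y2 Hs (neg_disc s x1 x2 Hx) Hy) as Hdn.
  pose proof (madd_nrm s (-x1) (-x2) y1 y2 Hs (Rgt_not_eq _ _ Hdn)) as Hn. cbv zeta in Hn.
  destruct (madd s (-x1,-x2) (y1,y2)) as [z1 z2] eqn:EZ. cbn [fst snd] in Hn.
  set (gd := Cmod (z1,z2)). assert (Hgd2 : gd^2 = z1^2+z2^2) by apply Cmod_sq.
  assert (Hgd0 : 0 <= gd) by (unfold gd, Cmod; apply sqrt_pos).
  set (dv := dn s (-x1) (-x2) y1 y2) in *.
  set (L := (-x1+y1)^2 + (-x2+y2)^2) in *.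
  set (hx := s^2-x1^2-x2^2). set (hy := s^2-y1^2-y2^2).
  assert (hx0 : 0 < hx) by (unfold hx; lra). assert (hy0 : 0 < hy) by (unfold hy; lra).
  assert (Edv : dv = s^2*L + hx*hy) by (unfold dv, dn, L, hx, hy; ring).
  assert (s2 : 0 < s^2) by (apply pow_lt; lra).
  assert (E1 : 1 - gd^2/s^2 = hx*hy/dv).
  { rewrite Hgd2, Hn. rewrite Edv in *. field. lra. }
  rewrite E1.
  assert (Eg : gd / (hx*hy/dv) = gd*dv/(hx*hy)) by (field; lra).
  rewrite Eg. split; [|split].
  - apply Rmult_le_pos; [apply Rmult_le_pos; lra|]. apply Rlt_le, Rinv_0_lt_compat. nra.
  - unfold uC; cbn [fst snd]. rewrite G_u.
    replace ((y1 - x1) ^ 2 + (y2 - x2) ^ 2) with L by (unfold L; ring). fold dv.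
    replace ((gd * dv / (hx * hy)) ^ 2) with (gd^2 * dv^2/(hx*hy)^2) by (field; lra).
    rewrite Hgd2, Hn. field. lra.
  - intro Hne. assert (0 < L).
    { unfold L. pose proof (pow2_ge_0 (-x1+y1)); pose proof (pow2_ge_0 (-x2+y2)).
      destruct (Req_dec ((-x1+y1)^2 + (-x2+y2)^2) 0) as [h|h]; [|lra].
      exfalso. apply Hne. assert (-x1+y1 = 0) by (apply sq0; lra). assert (-x2+y2 = 0) by (apply sq0; lra).
      f_equal; lra. }
    assert (0 < gd^2).
    { rewrite Hgd2, Hn. apply Rdiv_lt_0_compat; auto. apply Rmult_lt_0_compat; auto. apply pow_lt; lra. }
    assert (0 < gd) by (destruct Hgd0 as [h|h]; auto; rewrite <- h in H0; lra).
    apply Rmult_lt_0_compat; [apply Rmult_lt_0_compat; lra|]. apply Rinv_0_lt_compat. nra.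
Qed.

Lemma G_zero s x1 x2 y1 y2 : 0 < s -> x1^2+x2^2 < s^2 -> y1^2+y2^2 < s^2 ->
  G (uC s (x1,x2)) (uC s (y1,y2)) = 0 -> (x1,x2) = (y1,y2).
Proof.
  intros Hs Hx Hy H. unfold uC in H; cbn [fst snd] in H. rewrite G_u in H.
  pose proof (dn_pos s (-x1) (-x2) y1 y2 Hs (neg_disc s x1 x2 Hx) Hy) as Hdn.
  assert (s2 : 0 < s^2) by (apply pow_lt; lra).
  assert (HL : (y1 - x1) ^ 2 + (y2 - x2) ^ 2 = 0).
  { apply Rmult_integral in H. destruct H as [H|H]; [|lra].
    apply Rmult_integral in H. destruct H as [H|H]; [lra|auto]. }
  pose proof (pow2_ge_0 (y1-x1)); pose proof (pow2_ge_0 (y2-x2)).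
  assert (y1 - x1 = 0) by (apply sq0; lra). assert (y2-x2 = 0) by (apply sq0; lra).
  f_equal; lra.
Qed.

Lemma madd_cancel' s b1 b2 z1 z2 : 0 < s -> b1^2+b2^2 < s^2 -> z1^2+z2^2 < s^2 ->
  madd s (-b1,-b2) (madd s (b1,b2) (z1,z2)) = (z1,z2).
Proof.
  intros Hs Hb Hz. pose proof (madd_cancel s (-b1) (-b2) z1 z2 Hs (neg_disc s b1 b2 Hb) Hz) as H.
  rewrite !Ropp_involutive in H. auto.
Qed.

Lemma gyroside_facts s b1 b2 c1 c2 d1 d2 : 0 < s -> b1^2+b2^2 < s^2 -> c1^2+c2^2 < s^2 ->
  (b1,b2) <> (c1,c2) -> in_gyroside s (b1,b2) (c1,c2) (d1,d2) ->
  on_gyroline s (b1,b2) (c1,c2) (d1,d2) /\ d1^2+d2^2 < s^2 /\ (d1,d2) <> (b1,b2) /\ (d1,d2) <> (c1,c2).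
Proof.
  intros Hs Hb Hc Hbc [t [[t0 t1] HD]].
  split. { exists t; auto. }
  change (Copp (b1,b2)) with (-b1,-b2) in HD.
  pose proof (madd_cancel s b1 b2 c1 c2 Hs Hb Hc) as Hcb.
  pose proof (madd_disc s (-b1) (-b2) c1 c2 Hs (neg_disc s b1 b2 Hb) Hc) as Hv. cbv zeta in Hv.
  destruct (madd s (-b1,-b2) (c1,c2)) as [v1 v2] eqn:EV. cbn [fst snd] in Hv.
  destruct (mscal_form s t v1 v2 Hs) as [k [Hk Hkd]].
  pose proof (madd_disc s b1 b2 (k*v1) (k*v2) Hs Hb Hkd) as HDd. cbv zeta in HDd.
  rewrite Hk in HD. rewrite <- HD in HDd. cbn [fst snd] in HDd.
  split; auto.
  assert (Hv0 : 0 < v1^2 + v2^2).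
  { pose proof (pow2_ge_0 v1); pose proof (pow2_ge_0 v2).
    destruct (Req_dec (v1^2+v2^2) 0) as [h|h]; [|lra].
    exfalso. apply Hbc. assert (v1 = 0) by (apply sq0; lra).
    assert (v2 = 0) by (apply sq0; lra). subst v1 v2.
    rewrite <- Hcb. rewrite madd_0; auto. }
  set (cv := Cmod (v1,v2)).
  assert (Hcv2 : cv^2 = v1^2+v2^2) by apply Cmod_sq.
  assert (Hcv0 : 0 < cv) by (unfold cv, Cmod; cbn [fst snd]; apply sqrt_lt_R0; lra).
  assert (Hcvs : cv < s) by nra.
  assert (Hy : 0 < cv/s < 1).
  { split; apply (Rmult_lt_reg_r s); try lra; unfold Rdiv; rewrite ?Rmult_assoc, ?Rinv_l; lra. }
  assert (Hal : 0 < artanh_ (cv/s)) by (apply artanh_pos; auto).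
  assert (Hta : tanh_ (artanh_ (cv/s)) = cv/s) by (apply tanh_artanh; lra).
  assert (Hkv : k = s * tanh_ (t * artanh_ (cv / s)) / cv).
  { unfold mscal in Hk. fold cv in Hk. destruct (Req_EM_T cv 0) as [h|h]; [lra|].
    unfold Cmult, RtoC in Hk; cbn [fst snd] in Hk. injection Hk as E1 E2.
    set (kk := s * tanh_ (t * artanh_ (cv / s)) / cv) in *.
    assert (E1' : (kk - k) * v1 = 0) by lra. assert (E2' : (kk - k) * v2 = 0) by lra.
    destruct (Req_dec (kk - k) 0) as [h'|h']; [lra|].
    exfalso. apply Rmult_integral in E1'; apply Rmult_integral in E2'.
    destruct E1' as [|E1']; [contradiction|]. destruct E2' as [|E2']; [contradiction|].
    subst v1 v2. lra. }
  split.
  - intro HDB. rewrite HDB in HD.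
    rewrite <- (madd_0 s b1 b2 Hs) in HD at 1.
    apply (f_equal (madd s (-b1,-b2))) in HD.
    rewrite !madd_cancel' in HD; auto; [|nra].
    injection HD as E1 E2.
    assert (k = 0).
    { destruct (Req_dec k 0) as [h|h]; auto. exfalso.
      assert (v1 = 0) by (apply (Rmult_eq_reg_l k); lra). assert (v2 = 0) by (apply (Rmult_eq_reg_l k); lra).
      subst v1 v2. lra. }
    rewrite Hkv in H. assert (tanh_ (t * artanh_ (cv / s)) = tanh_ 0).
    { rewrite tanh_0. apply (Rmult_eq_reg_l (s/cv)); [|apply Rgt_not_eq, Rdiv_lt_0_compat; lra].
      rewrite Rmult_0_r. rewrite <- H. field. lra. }
    apply tanh_inj in H0. nra.
  - intro HDC. rewrite HDC, <- Hcb in HD.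
    apply (f_equal (madd s (-b1,-b2))) in HD.
    rewrite !madd_cancel' in HD; auto.
    injection HD as E1 E2.
    assert (k = 1).
    { destruct (Req_dec k 1) as [h|h]; auto. exfalso.
      assert (v1 = 0) by (apply (Rmult_eq_reg_l (1-k)); lra). assert (v2 = 0) by (apply (Rmult_eq_reg_l (1-k)); lra).
      subst v1 v2. lra. }
    rewrite Hkv in H. assert (tanh_ (t * artanh_ (cv / s)) = tanh_ (artanh_ (cv/s))).
    { rewrite Hta. apply (Rmult_eq_reg_l (s/cv)); [|apply Rgt_not_eq, Rdiv_lt_0_compat; lra].
      replace (s/cv * (cv/s)) with 1 by (field; lra). rewrite <- H. field. lra. }
    apply tanh_inj in H0. nra.
Qed.


Lemma sq_inj x y : 0 <= x -> 0 <= y -> x^2 = y^2 -> x = y.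
Proof. intros. apply Rsqr_inj; auto. unfold Rsqr. simpl in H1. lra. Qed.

Theorem theorem5 (s : R) (A B C D E F M N P : C) :
  0 < s ->
  in_disc s A -> in_disc s B -> in_disc s C ->
  A <> B -> B <> C -> C <> A ->
  ~ on_gyroline s A B C ->
  in_gyroside s B C D ->
  in_disc s E -> in_disc s F -> E <> F ->
  ~ on_gyroline s E F A -> ~ on_gyroline s E F B -> ~ on_gyroline s E F C ->
  in_disc s M -> on_gyroline s E F M -> on_gyroline s A B M ->
  in_disc s N -> on_gyroline s E F N -> on_gyroline s A C N ->
  in_disc s P -> on_gyroline s E F P -> on_gyroline s A D P ->
  gam s (gdist s B D) / gam s (gdist s C D)
  * (gam s (gdist s C A) / gam s (gdist s N A))
  * (gam s (gdist s N P) / gam s (gdist s M P))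
  * (gam s (gdist s M A) / gam s (gdist s B A)) = 1.
Proof.
  intros Hs HA HB HC HAB HBC HCA HnABC HD HE HF HEF HnA HnB HnC HM HMl HMab HN HNl HNac HP HPl HPad.
  destruct A as [a1 a2], B as [b1 b2], C as [c1 c2], D as [d1 d2], E as [e1 e2], F as [f1 f2],
    M as [m1 m2], N as [n1 n2], P as [p1 p2].
  rewrite disc_iff in HA, HB, HC, HE, HF, HM, HN, HP by auto.
  destruct (gyroside_facts s b1 b2 c1 c2 d1 d2 Hs HB HC HBC HD) as [HDl [HDd [HDB HDC]]].
  pose proof (line_det s a1 a2 b1 b2 _ Hs HA HB HMab) as dM1.
  pose proof (line_det s e1 e2 f1 f2 _ Hs HE HF HMl) as dM2.
  pose proof (line_det s a1 a2 c1 c2 _ Hs HA HC HNac) as dN1.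
  pose proof (line_det s e1 e2 f1 f2 _ Hs HE HF HNl) as dN2.
  pose proof (line_det s a1 a2 d1 d2 _ Hs HA HDd HPad) as dP1.
  pose proof (line_det s e1 e2 f1 f2 _ Hs HE HF HPl) as dP2.
  pose proof (line_det s b1 b2 c1 c2 _ Hs HB HC HDl) as dD.
  assert (HDel : det3 (uC s (a1,a2)) (uC s (b1,b2)) (uC s (c1,c2)) <> 0).
  { intro h. apply HnABC. apply det_line; auto. }
  assert (HGef : G (uC s (e1,e2)) (uC s (f1,f2)) <> 0).
  { intro h. apply HEF. apply G_zero in h; auto. }
  pose proof (plane _ _ _ _ _ HGef dM2 dN2 dP2) as Hmnp.
  assert (Hma : G (uC s (m1,m2)) (uC s (a1,a2)) <> 0).
  { intro h. apply G_zero in h; auto. apply HnA. rewrite <- h. auto. }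
  assert (Hna : G (uC s (n1,n2)) (uC s (a1,a2)) <> 0).
  { intro h. apply G_zero in h; auto. apply HnA. rewrite <- h. auto. }
  pose proof (LA _ _ _ _ _ _ _ HDel dD dM1 dN1 dP1 Hmnp Hma Hna) as Hid.
  assert (HMP : (m1,m2) <> (p1,p2)).
  { intro h. rewrite <- h in dP1.
    pose proof (LA2 _ _ _ _ _ HDel dD dM1 dP1 Hma) as h'.
    apply G_zero in h'; auto. }
  destruct (gam_facts s b1 b2 d1 d2 Hs HB HDd) as [g1p [g1e _]].
  destruct (gam_facts s c1 c2 d1 d2 Hs HC HDd) as [g2p [g2e g2s]].
  destruct (gam_facts s c1 c2 a1 a2 Hs HC HA) as [g3p [g3e _]].
  destruct (gam_facts s n1 n2 a1 a2 Hs HN HA) as [g4p [g4e g4s]].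
  destruct (gam_facts s n1 n2 p1 p2 Hs HN HP) as [g5p [g5e _]].
  destruct (gam_facts s m1 m2 p1 p2 Hs HM HP) as [g6p [g6e g6s]].
  destruct (gam_facts s m1 m2 a1 a2 Hs HM HA) as [g7p [g7e _]].
  destruct (gam_facts s b1 b2 a1 a2 Hs HB HA) as [g8p [g8e g8s]].
  assert (NA : (n1,n2) <> (a1,a2)).
  { intro h. apply HnA. rewrite <- h. auto. }
  specialize (g2s (not_eq_sym HDC)). specialize (g4s NA). specialize (g6s HMP).
  specialize (g8s (not_eq_sym HAB)).
  set (g1 := gam s (gdist s (b1, b2) (d1, d2))) in *.
  set (g2 := gam s (gdist s (c1, c2) (d1, d2))) in *.
  set (g3 := gam s (gdist s (c1, c2) (a1, a2))) in *.
  set (g4 := gam s (gdist s (n1, n2) (a1, a2))) in *.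
  set (g5 := gam s (gdist s (n1, n2) (p1, p2))) in *.
  set (g6 := gam s (gdist s (m1, m2) (p1, p2))) in *.
  set (g7 := gam s (gdist s (m1, m2) (a1, a2))) in *.
  set (g8 := gam s (gdist s (b1, b2) (a1, a2))) in *.
  clearbody g1 g2 g3 g4 g5 g6 g7 g8.
  set (hA := s^2 - a1^2 - a2^2) in *. set (hB := s^2 - b1^2 - b2^2) in *.
  set (hC := s^2 - c1^2 - c2^2) in *. set (hD := s^2 - d1^2 - d2^2) in *.
  set (hM := s^2 - m1^2 - m2^2) in *. set (hN := s^2 - n1^2 - n2^2) in *.
  set (hP := s^2 - p1^2 - p2^2) in *.
  assert (0 < hA) by (unfold hA; lra). assert (0 < hB) by (unfold hB; lra).
  assert (0 < hC) by (unfold hC; lra). assert (0 < hD) by (unfold hD; lra).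
  assert (0 < hM) by (unfold hM; lra). assert (0 < hN) by (unfold hN; lra).
  assert (0 < hP) by (unfold hP; lra).
  set (Hod := 4*hB^2*hD^2 * (4*hC^2*hA^2) * (4*hN^2*hP^2) * (4*hM^2*hA^2)).
  assert (Hod0 : 0 < Hod).
  { unfold Hod. repeat apply Rmult_lt_0_compat; try lra; apply pow_lt; auto. }
  assert (Sq : (g1*g3*g5*g7)^2 * Hod = (g2*g4*g6*g8)^2 * Hod).
  { transitivity ((g1^2 * (4*hB^2*hD^2)) * (g3^2 * (4*hC^2*hA^2)) * (g5^2 * (4*hN^2*hP^2)) * (g7^2*(4*hM^2*hA^2))).
    { unfold Hod. ring. }
    rewrite g1e, g3e, g5e, g7e.
    transitivity ((g2^2 * (4*hC^2*hD^2)) * (g4^2 * (4*hN^2*hA^2)) * (g6^2 * (4*hM^2*hP^2)) * (g8^2*(4*hB^2*hA^2))).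
    { rewrite g2e, g4e, g6e, g8e.
      transitivity ((s^2)^4 * (G (uC s (b1, b2)) (uC s (d1, d2)) * G (uC s (c1, c2)) (uC s (a1, a2)) *
        G (uC s (n1, n2)) (uC s (p1, p2)) * G (uC s (m1, m2)) (uC s (a1, a2)))). ring.
      rewrite Hid. ring. }
    unfold Hod. ring. }
  assert (Eq : g1*g3*g5*g7 = g2*g4*g6*g8).
  { apply sq_inj.
    - repeat apply Rmult_le_pos; auto.
    - repeat apply Rmult_le_pos; lra.
    - apply (Rmult_eq_reg_r Hod); lra. }
  replace (g1 / g2 * (g3 / g4) * (g5 / g6) * (g7 / g8)) with ((g1*g3*g5*g7)/(g2*g4*g6*g8))
    by (field; repeat split; lra).
  rewrite Eq. field. repeat split; lra.
Qed.
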